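(* For an $E$-linear code $C$ of length $2n$, $$(SHull(C))_{Res}\subseteq SHull(C_{Res})\quad\text{and}\quad (SHull(C))_{Tor}\supseteq SHull(C_{Tor}).$$ Moreover, both inclusions are equalities if $C$ is free.
   Context: $E=\langle \kappa,\tau \mid 2\kappa=2\tau=0,\ \kappa^2=\kappa,\ \tau^2=\tau,\ \kappa\tau=\kappa,\ \tau\kappa=\tau\rangle$ is the non-unital ring $\{0,\kappa,\tau,\zeta\}$, $\zeta=\kappa+\tau$, with $e\kappa=e\tau=e$, $e\zeta=0$ for all $e\in E$. Every $e\in E$ is uniquely $u\kappa+v\zeta$ ($u,v\in\mathbb{F}_2$); $\pi(u\kappa+v\zeta)=u$, componentwise. An $E$-linear code of length $2n$ is a left $E$-submodule $C\subseteq E^{2n}$; $C_{Res}=\pi(C)$, $C_{Tor}=\{v\in\mathbb{F}_2^{2n}:\zeta v\in C\}$ (componentwise, $0\cdot\zeta=0,1\cdot\zeta=\zeta$); $C$ is free if $C_{Res}=C_{Tor}$. Symplectic inner product (over $E$ or $\mathbb{F}_2$): $\langle (u|v),(u'|v')\rangle_s=\sum_i u_iv'_i+\sum_i v_iu'_i$. For binary $B$: $B^{\perp_S}=\{z:\langle z,w\rangle_s=0\ \forall w\in B\}$, $SHull(B)=B\cap B^{\perp_S}$. For $E$-linear $C$: $C^{\perp_S}=\{z\in E^{2n}:\langle z,w\rangle_s=\langle w,z\rangle_s=0\ \forall w\in C\}$ and $SHull(C)=C\cap C^{\perp_S}$. *)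

(* Defs.v *)
From HB Require Import structures.
From mathcomp Require Import all_boot all_order.
Set Implicit Arguments. Unset Strict Implicit. Unset Printing Implicit Defensive.

(* The non-unital ring E = {0, kappa, tau, zeta}, zeta = kappa + tau. *)
Inductive E := E0 | Ekappa | Etau | Ezeta.

Definition E_enc (e : E) : bool * bool :=
  match e with E0 => (false, false) | Ekappa => (true, false)
             | Etau => (false, true) | Ezeta => (true, true) end.
Definition E_dec (p : bool * bool) : E :=
  match p with (false, false) => E0 | (true, false) => Ekappa
             | (false, true) => Etau | (true, true) => Ezeta end.
Lemma E_encK : cancel E_enc E_dec. Proof. by case. Qed.
HB.instance Definition _ := Equality.copy E (can_type E_encK).
HB.instance Definition _ := Choice.copy E (can_type E_encK).
HB.instance Definition _ := Countable.copy E (can_type E_encK).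
HB.instance Definition _ := Finite.copy E (can_type E_encK).

Definition addE (x y : E) : E :=
  match x, y with
  | E0, z | z, E0 => z
  | Ekappa, Ekappa | Etau, Etau | Ezeta, Ezeta => E0
  | Ekappa, Etau | Etau, Ekappa => Ezeta
  | Ekappa, Ezeta | Ezeta, Ekappa => Etau
  | Etau, Ezeta | Ezeta, Etau => Ekappa
  end.

Definition mulE (x y : E) : E :=
  match y with Ekappa | Etau => x | _ => E0 end.

(* pi (u kappa + v zeta) = u *)
Definition piE (e : E) : bool :=
  match e with Ekappa | Etau => true | _ => false end.

Definition zetaE (b : bool) : E := if b then Ezeta else E0.

(* Words of length 2n: index i < n is the u-part, n + i the v-part. *)
Definition Eword n := {ffun 'I_(n + n) -> E}.
Definition Bword n := {ffun 'I_(n + n) -> bool}.  (* F_2 = bool, + = xor, * = && *)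

Definition addw n (x y : Eword n) : Eword n := [ffun i => addE (x i) (y i)].
Definition scalew n (e : E) (x : Eword n) : Eword n := [ffun i => mulE e (x i)].
Definition zerow n : Eword n := [ffun => E0].

Definition Elinear n (C : {set Eword n}) : Prop :=
  [/\ zerow n \in C,
      (forall x y, x \in C -> y \in C -> addw x y \in C) &
      (forall e x, x \in C -> scalew e x \in C)].

Definition Res n (C : {set Eword n}) : {set Bword n} :=
  [set ([ffun i => piE (c i)] : Bword n) | c : Eword n in C].
Definition Tor n (C : {set Eword n}) : {set Bword n} :=
  [set v : Bword n | [ffun i => zetaE (v i)] \in C].
Definition free n (C : {set Eword n}) : Prop := Res C = Tor C.

Definition sympE n (x y : Eword n) : E :=
  addE (\big[addE/E0]_(i < n) mulE (x (lshift n i)) (y (rshift n i)))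
       (\big[addE/E0]_(i < n) mulE (x (rshift n i)) (y (lshift n i))).
Definition sympB n (x y : Bword n) : bool :=
  addb (\big[addb/false]_(i < n) (x (lshift n i) && y (rshift n i)))
       (\big[addb/false]_(i < n) (x (rshift n i) && y (lshift n i))).

Definition perpB n (B : {set Bword n}) : {set Bword n} :=
  [set z | [forall w in B, ~~ sympB z w]].
Definition SHullB n (B : {set Bword n}) : {set Bword n} := B :&: perpB B.

Definition perpE n (C : {set Eword n}) : {set Eword n} :=
  [set z | [forall w in C, (sympE z w == E0) && (sympE w z == E0)]].
Definition SHullE n (C : {set Eword n}) : {set Eword n} := C :&: perpE C.

(* Main.v *)
Require Import Defs.
From mathcomp Require Import all_boot all_order.
Import Defs.
Set Implicit Arguments. Unset Strict Implicit. Unset Printing Implicit Defensive.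

Definition vE (e : E) : bool := match e with Etau | Ezeta => true | _ => false end.
Definition pw n (x : Eword n) : Bword n := [ffun i => piE (x i)].
Definition vw n (x : Eword n) : Bword n := [ffun i => vE (x i)].
Definition zw n (v : Bword n) : Eword n := [ffun i => zetaE (v i)].

Lemma piE_add a b : piE (addE a b) = piE a (+) piE b. Proof. by case: a; case: b. Qed.
Lemma vE_add a b : vE (addE a b) = vE a (+) vE b. Proof. by case: a; case: b. Qed.
Lemma piE_mul a b : piE (mulE a b) = piE a && piE b. Proof. by case: a; case: b. Qed.
Lemma vE_mul a b : vE (mulE a b) = vE a && piE b. Proof. by case: a; case: b. Qed.
Lemma E0P e : (e == E0) = ~~ piE e && ~~ vE e. Proof. by case: e. Qed.

Lemma piE_symp n (x y : Eword n) : piE (sympE x y) = sympB (pw x) (pw y).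
Proof.
rewrite /sympE /sympB piE_add.
rewrite (big_morph piE piE_add (erefl : piE E0 = false)) (big_morph piE piE_add (erefl : piE E0 = false)).
by congr (_ (+) _); apply: eq_bigr => i _; rewrite piE_mul !ffunE.
Qed.

Lemma vE_symp n (x y : Eword n) : vE (sympE x y) = sympB (vw x) (pw y).
Proof.
rewrite /sympE /sympB vE_add.
rewrite (big_morph vE vE_add (erefl : vE E0 = false)) (big_morph vE vE_add (erefl : vE E0 = false)).
by congr (_ (+) _); apply: eq_bigr => i _; rewrite vE_mul !ffunE.
Qed.

Lemma sympE0 n (x y : Eword n) :
  (sympE x y == E0) = ~~ sympB (pw x) (pw y) && ~~ sympB (vw x) (pw y).
Proof. by rewrite E0P piE_symp vE_symp. Qed.

Lemma sympBC n (a b : Bword n) : sympB a b = sympB b a.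
Proof.
rewrite /sympB addbC; congr (_ (+) _); apply: eq_bigr => i _; exact: andbC.
Qed.

Lemma sympB0l n (b : Bword n) : sympB [ffun => false] b = false.
Proof. by rewrite /sympB !big1 // => i _; rewrite ffunE. Qed.

Lemma sympB0r n (b : Bword n) : sympB b [ffun => false] = false.
Proof. by rewrite sympBC sympB0l. Qed.

Lemma pw_zw n (v : Bword n) : pw (zw v) = [ffun => false].
Proof. by apply/ffunP => i; rewrite !ffunE; case: (v i). Qed.
Lemma vw_zw n (v : Bword n) : vw (zw v) = v.
Proof. by apply/ffunP => i; rewrite !ffunE; case: (v i). Qed.

Theorem mainTheorem8 (n : nat) (C : {set Eword n}) :
  Elinear C ->
  [/\ Res (SHullE C) \subset SHullB (Res C),
      SHullB (Tor C) \subset Tor (SHullE C) &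
      (free C -> Res (SHullE C) = SHullB (Res C) /\
                 Tor (SHullE C) = SHullB (Tor C))].
Proof.
case=> C0 Cadd Cscale.
have ResTor : forall w, w \in C -> pw w \in Tor C.
  move=> w wC; rewrite inE.
  have -> : [ffun i => zetaE (pw w i)] = scalew Ezeta w.
    by apply/ffunP => i; rewrite !ffunE; case: (w i).
  exact: Cscale.
have vTor : forall w, w \in C -> vw w \in Tor C.
  move=> w wC; rewrite inE.
  have -> : [ffun i => zetaE (vw w i)] = addw w (scalew Ekappa w).
    by apply/ffunP => i; rewrite !ffunE; case: (w i).
  by apply: Cadd => //; apply: Cscale.
have P1 : Res (SHullE C) \subset SHullB (Res C).
  apply/subsetP => x /imsetP [c]; rewrite !inE => /andP [cC cP] ->.
  apply/andP; split; first by apply: imset_f.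
  apply/forallP => w; apply/implyP => /imsetP [w' w'C ->].
  move/forallP: cP => /(_ w'); rewrite w'C /= => /andP [/eqP h _].
  by rewrite -/(pw c) -/(pw w') -piE_symp h.
have P2 : SHullB (Tor C) \subset Tor (SHullE C).
  apply/subsetP => v; rewrite !inE => /andP [vC vP].
  rewrite [_ \in C]vC /=; apply/forallP => w; apply/implyP => wC.
  rewrite !sympE0 -/(zw v) pw_zw vw_zw sympB0l sympB0r /=.
  rewrite sympB0r andbT; by move/forallP: vP => /(_ (pw w)); rewrite ResTor.
split => // fr; split; apply/eqP; rewrite eqEsubset ?P1 ?P2 ?andbT //.
- apply/subsetP => u; rewrite !inE => /andP [/imsetP [w wC ->] uP].
  set c := scalew Ekappa w.
  have cC : c \in C by apply: Cscale.
  have pc : pw c = pw w by apply/ffunP => i; rewrite !ffunE; case: (w i).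
  have vc : vw c = [ffun => false] by apply/ffunP => i; rewrite !ffunE; case: (w i).
  have -> : ([ffun i => piE (w i)] : Bword n) = pw c by rewrite pc.
  apply/imsetP; exists c => //; rewrite !inE cC /=; apply/forallP => w'; apply/implyP => w'C.
  have h1 : ~~ sympB (pw w) (pw w').
    by move/forallP: uP => /(_ (pw w')); rewrite (imset_f _ w'C).
  have h2 : ~~ sympB (pw w) (vw w').
    move/forallP: uP => /(_ (vw w')); rewrite /free in fr.
    by rewrite fr vTor.
  rewrite !sympE0 pc vc sympB0l h1 /=.
  by rewrite sympBC h1 sympBC h2.
- apply/subsetP => v; rewrite !inE => /andP [vC vP].
  rewrite [_ \in C]vC /=; apply/forallP => t; apply/implyP.
  rewrite -fr => /imsetP [w wC ->].
  move/forallP: vP => /(_ w); rewrite wC /= => /andP [h _].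
  by move: h; rewrite sympE0 -/(zw v) vw_zw => /andP [].
Qed.
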